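(* Suppose $d=3$ and let $\Pi\subseteq\Sigma$. The cones $\sigma^1_\Pi$ and $\sigma^2_\Pi$ intersect nontrivially (i.e. $\sigma^1_\Pi\cap\sigma^2_\Pi\ne\{0\}$) if and only if $\Pi$ consists of more than one interval. In that case $\sigma_\Pi=N_\mathbb{R}$.
   Context: $N\cong\mathbb{Z}^3$, $\sigma\subset N_\mathbb{R}$ a strongly convex rational polyhedral cone of dimension $3$, $\Sigma=\sigma(1)$ its set of rays with primitive generators $n(\rho)$. The rays carry a cyclic order in which two rays are adjacent iff they span a $2$-dimensional face of $\sigma$ (equivalently, the cyclic order of the vertices $\rho\cap H$ of the polygon $\sigma\cap H$ for an affine hyperplane $H$ meeting $\sigma$ in a bounded polygon). ''$\Pi$ consists of more than one interval'' means that $\Pi$, viewed as a set of vertices of this cycle, decomposes into more than one maximal block of cyclically consecutive rays. $\sigma^1_\Pi=\operatorname{cone}(n(\rho):\rho\in\Pi)$, $\sigma^2_\Pi=\operatorname{cone}(n(\rho):\rho\in\Sigma\setminus\Pi)$, and $\sigma_\Pi=\operatorname{cone}(-n(\rho):\rho\in\Pi;\ n(\rho):\rho\in\Sigma\setminus\Pi)$, all cones over $\mathbb{R}_{\ge0}$. *)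

(* Defs.v *)
(* N = Z^3 realized as 'rV[int]_3, N_R = 'rV[R]_3, R : realType. *)
From HB Require Import structures.
From mathcomp Require Import all_boot all_order all_algebra.
From mathcomp Require Import reals.
Set Implicit Arguments. Unset Strict Implicit. Unset Printing Implicit Defensive.
Import Order.TTheory GRing.Theory Num.Theory.
Local Open Scope ring_scope.

Definition realize (R : realType) (w : 'rV[int]_3) : 'rV[R]_3 :=
  \row_j ((w 0 j)%:~R : R).

(* standard pairing M_R x N_R -> R *)
Definition dot (R : realType) (u x : 'rV[R]_3) : R := \sum_(j < 3) u 0 j * x 0 j.

Definition cone (R : realType) (k : nat) (S : {set 'I_k}) (g : 'I_k -> 'rV[R]_3)
    (x : 'rV[R]_3) : Prop :=
  exists c : 'I_k -> R, (forall i, 0 <= c i) /\ x = \sum_(i in S) c i *: g i.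

Definition face_set (R : realType) (k : nat) (g : 'I_k -> 'rV[R]_3) (S : {set 'I_k}) : Prop :=
  exists u : 'rV[R]_3, (forall i, 0 <= dot u (g i)) /\
                        (forall i, dot u (g i) = 0 <-> i \in S).

(* n : 'I_k -> N lists the primitive ray generators of a strongly convex rational
   polyhedral cone sigma of dimension 3, indexed in the cyclic order of the rays
   (i adjacent to ordS i). *)
Definition cyclic_ray_data (R : realType) (k : nat) (n : 'I_k -> 'rV[int]_3) : Prop :=
  let v := fun i => realize R (n i) in
  (forall i (d : int), (forall j, (d %| n i ord0 j)%Z) -> `|d| = 1) /\
  (forall x, cone setT v x -> cone setT v (- x) -> x = 0) /\
  (* dimension 3: sigma spans N_R *)
  (forall x : 'rV[R]_3, exists c : 'I_k -> R, x = \sum_i c i *: v i) /\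
  (* each n i spans a ray (1-dim face) of sigma; distinct i give distinct rays,
     and since sigma = cone(n i), every ray of sigma is among them *)
  (forall i, face_set v [set i]) /\
  (* cyclic order: distinct rays are adjacent iff they span a 2-dim face *)
  (forall i j, i != j -> (face_set v [set i; j] <-> (j = ordS i \/ i = ordS j))).

(* number of maximal blocks of cyclically consecutive indices of Pi *)
Definition num_intervals (k : nat) (Pi : {set 'I_k}) : nat :=
  if Pi == setT then 1%N else #|[set i in Pi | ord_pred i \notin Pi]|.

Definition signed_gens (R : realType) (k : nat) (n : 'I_k -> 'rV[int]_3)
    (Pi : {set 'I_k}) (i : 'I_k) : 'rV[R]_3 :=
  if i \in Pi then - realize R (n i) else realize R (n i).

(* Main.v *)
Require Import Defs.
From HB Require Import structures.
From mathcomp Require Import all_boot all_order all_algebra.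
From mathcomp Require Import reals.
From mathcomp Require Import ring lra zify.
Import Order.TTheory GRing.Theory Num.Theory.
Local Open Scope ring_scope.

Set Implicit Arguments. Unset Strict Implicit. Unset Printing Implicit Defensive.

Definition i0 : 'I_3 := @Ordinal 3 0 isT.
Definition i1 : 'I_3 := @Ordinal 3 1 isT.
Definition i2 : 'I_3 := @Ordinal 3 2 isT.

Lemma ord3P (j : 'I_3) : j = i0 \/ j = i1 \/ j = i2.
Proof.
case: j => [[|[|[|j]]] Hj].
- by left; apply/val_inj.
- by right; left; apply/val_inj.
- by right; right; apply/val_inj.
- by [].
Qed.

Definition cross (R : realType) (p q : 'rV[R]_3) : 'rV[R]_3 :=
  \row_j (if j == i0 then p 0 i1 * q 0 i2 - p 0 i2 * q 0 i1
          else if j == i1 then p 0 i2 * q 0 i0 - p 0 i0 * q 0 i2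
          else p 0 i0 * q 0 i1 - p 0 i1 * q 0 i0).

Definition det3 (R : realType) (p q x : 'rV[R]_3) : R := dot (cross p q) x.

Lemma dot_expand (R : realType) (u x : 'rV[R]_3) :
  dot u x = u 0 i0 * x 0 i0 + u 0 i1 * x 0 i1 + u 0 i2 * x 0 i2.
Proof.
rewrite /dot !big_ord_recl big_ord0 addr0 addrA.
by congr (_ * _ + _ * _ + _ * _); congr (_ _ _); apply/val_inj.
Qed.

Lemma det3E (R : realType) (p q x : 'rV[R]_3) : det3 p q x =
  (p 0 i1 * q 0 i2 - p 0 i2 * q 0 i1) * x 0 i0 +
  (p 0 i2 * q 0 i0 - p 0 i0 * q 0 i2) * x 0 i1 +
  (p 0 i0 * q 0 i1 - p 0 i1 * q 0 i0) * x 0 i2.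
Proof. by rewrite /det3 dot_expand !mxE. Qed.

Lemma dotD (R : realType) (u x y : 'rV[R]_3) : dot u (x + y) = dot u x + dot u y.
Proof. by rewrite !dot_expand !mxE; ring. Qed.
Lemma dotZ (R : realType) (u x : 'rV[R]_3) a : dot u (a *: x) = a * dot u x.
Proof. by rewrite !dot_expand !mxE; ring. Qed.
Lemma dotN (R : realType) (u x : 'rV[R]_3) : dot u (- x) = - dot u x.
Proof. by rewrite !dot_expand !mxE; ring. Qed.
Lemma dot0 (R : realType) (u : 'rV[R]_3) : dot u 0 = 0.
Proof. by rewrite !dot_expand !mxE; ring. Qed.
Lemma dotZl (R : realType) (u x : 'rV[R]_3) a : dot (a *: u) x = a * dot u x.
Proof. by rewrite !dot_expand !mxE; ring. Qed.

Lemma dot_sum (R : realType) (k : nat) (u : 'rV[R]_3) (S : {set 'I_k}) c g :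
  dot u (\sum_(i in S) c i *: g i) = \sum_(i in S) c i * dot u (g i).
Proof.
rewrite (big_morph (dot u) (@dotD R u) (dot0 u)).
by apply: eq_bigr => i _; rewrite dotZ.
Qed.

Lemma cramer (R : realType) (p x y z : 'rV[R]_3) :
  det3 x y z *: p - det3 p y z *: x + det3 p x z *: y - det3 p x y *: z = 0.
Proof.
apply/rowP => j; rewrite !mxE !det3E.
by case: (ord3P j) => [->|[->|->]]; ring.
Qed.

Lemma det_rot (R : realType) (a b c : 'rV[R]_3) : det3 a b c = det3 b c a.
Proof. rewrite !det3E; ring. Qed.
Lemma det_swap (R : realType) (a b c : 'rV[R]_3) : det3 a b c = - det3 a c b.
Proof. rewrite !det3E; ring. Qed.
Lemma det_aba (R : realType) (a b : 'rV[R]_3) : det3 a b a = 0.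
Proof. rewrite !det3E; ring. Qed.
Lemma det_abb (R : realType) (a b : 'rV[R]_3) : det3 a b b = 0.
Proof. rewrite !det3E; ring. Qed.

Definition ev (R : realType) (j : 'I_3) : 'rV[R]_3 := \row_l (if l == j then 1 else 0).

Lemma det0_vec (R : realType) (a : 'rV[R]_3) : (forall y z, det3 a y z = 0) -> a = 0.
Proof.
move=> H; apply/rowP => j; rewrite mxE.
have h0 := H (ev R i1) (ev R i2); have h1 := H (ev R i2) (ev R i0);
have h2 := H (ev R i0) (ev R i1).
rewrite !det3E !mxE /= in h0 h1 h2.
by case: (ord3P j) => [->|[->|->]]; lra.
Qed.


Lemma cone_gen (R : realType) k (S : {set 'I_k}) (g : 'I_k -> 'rV[R]_3) i :
  i \in S -> cone S g (g i).
Proof.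
move=> iS; exists (fun j => if j == i then 1 else 0); split.
  by move=> j; case: (j == i).
rewrite (bigD1 i) //= eqxx scale1r big1 ?addr0 // => j /andP[_ /negbTE ->].
by rewrite scale0r.
Qed.

Lemma cone_add (R : realType) k (S : {set 'I_k}) (g : 'I_k -> 'rV[R]_3) x y :
  cone S g x -> cone S g y -> cone S g (x + y).
Proof.
move=> [c [c0 ->]] [d [d0 ->]]; exists (fun j => c j + d j); split.
  by move=> j; apply: addr_ge0.
by rewrite -big_split /=; apply: eq_bigr => j _; rewrite scalerDl.
Qed.

Lemma cone_scale (R : realType) k (S : {set 'I_k}) (g : 'I_k -> 'rV[R]_3) a x :
  0 <= a -> cone S g x -> cone S g (a *: x).
Proof.
move=> a0 [c [c0 ->]]; exists (fun j => a * c j); split.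
  by move=> j; apply: mulr_ge0.
by rewrite scaler_sumr; apply: eq_bigr => j _; rewrite scalerA.
Qed.

Lemma cone_set0 (R : realType) k (g : 'I_k -> 'rV[R]_3) x :
  cone set0 g x -> x = 0.
Proof. by move=> [c [_ ->]]; rewrite big_pred0 // => i; rewrite inE. Qed.

Lemma span_all (R : realType) (C : 'rV[R]_3 -> Prop) g1 g2 g3 g4 (a b c d : R) :
  (forall x y, C x -> C y -> C (x + y)) ->
  (forall t x, 0 <= t -> C x -> C (t *: x)) ->
  C g1 -> C g2 -> C g3 -> C g4 ->
  0 < a -> 0 < b -> 0 < c -> 0 < d ->
  a *: g1 + b *: g2 + c *: g3 + d *: g4 = 0 ->
  det3 g1 g2 g3 != 0 -> forall x, C x.
Proof.
move=> Cadd Csc C1 C2 C3 C4 a0 b0 c0 d0 rel dn x.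
have line : forall y, C y -> C (- y) -> forall t, C (t *: y).
  move=> y Cy Cny t; case: (lerP 0 t) => t0; first exact: Csc.
  by rewrite -[t]opprK scaleNr -scalerN; apply: (Csc) => //; lra.
have C3' : forall y1 y2 y3, C y1 -> C y2 -> C y3 -> forall t1 t2 t3 : R,
    0 <= t1 -> 0 <= t2 -> 0 <= t3 -> C (t1 *: y1 + t2 *: y2 + t3 *: y3).
  move=> y1 y2 y3 h1 h2 h3 t1 t2 t3 p1 p2 p3; exact: (Cadd _ _ (Cadd _ _ (Csc _ _ p1 h1) (Csc _ _ p2 h2)) (Csc _ _ p3 h3)).
have key : forall (t : R) y z, 0 < t -> t *: y + z = 0 -> C z -> C (- y).
  move=> t y z t0 e Cz.
  have -> : - y = t^-1 *: z.
    apply: (@scalerI _ _ t); first by rewrite gt_eqF.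
    rewrite scalerA divff ?gt_eqF // scale1r scalerN; apply/eqP; by rewrite eq_sym -addr_eq0 addrC e.
  by apply: (Csc) => //; rewrite invr_ge0 ltW.
have N1 : C (- g1).
  apply: (key a _ (b *: g2 + c *: g3 + d *: g4) a0).
    by rewrite -rel; apply/rowP=> j; rewrite !mxE; ring.
  by apply: C3' => //; apply: ltW.
have N2 : C (- g2).
  apply: (key b _ (a *: g1 + c *: g3 + d *: g4) b0).
    by rewrite -rel; apply/rowP=> j; rewrite !mxE; ring.
  by apply: C3' => //; apply: ltW.
have N3 : C (- g3).
  apply: (key c _ (a *: g1 + b *: g2 + d *: g4) c0).
    by rewrite -rel; apply/rowP=> j; rewrite !mxE; ring.
  by apply: C3' => //; apply: ltW.
have -> : x = (det3 g1 g2 g3)^-1 *: (det3 x g2 g3 *: g1 + det3 x g1 g2 *: g3 - det3 x g1 g3 *: g2).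
  apply: (scalerI dn); rewrite scalerA divff // scale1r.
  have /rowP h := cramer x g1 g2 g3; apply/rowP => j; have := h j; rewrite !mxE; lra.
rewrite !scalerDr !scalerN !scalerA; apply: (Cadd); first apply: (Cadd).
- exact: line.
- exact: line.
- by rewrite -scaleNr; apply: line.
Qed.


Lemma trans_lem (R : realType) (f p x y z : 'rV[R]_3) (e : R) :
  dot f p = 0 -> 0 < dot f x -> 0 < dot f y -> 0 < dot f z ->
  0 < e * det3 p x y -> 0 < e * det3 p y z -> 0 < e * det3 p x z.
Proof.
move=> fp fx fy fz h1 h2.
have := congr1 (dot f) (cramer p x y z).
rewrite dot0 !dotD !dotN !dotZ fp mulr0 add0r => h.
have E : (e * det3 p x z) * dot f y = (e * det3 p y z) * dot f x + (e * det3 p x y) * dot f z.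
  by rewrite -!mulrA -mulrDr; congr (_ * _); lra.
have : 0 < (e * det3 p x z) * dot f y.
  by rewrite E; apply: addr_gt0; apply: mulr_gt0.
by rewrite pmulr_lgt0.
Qed.

Lemma edge_rel (R : realType) (u a b c x : 'rV[R]_3) :
  dot u a = 0 -> dot u b = 0 -> det3 a b x * dot u c = det3 a b c * dot u x.
Proof.
move=> ua ub.
have := congr1 (dot u) (cramer a b c x).
rewrite dot0 !dotD !dotN !dotZ ua ub !mulr0 subr0 add0r; lra.
Qed.

Lemma nondeg (R : realType) (f g a b : 'rV[R]_3) :
  dot f a = 0 -> 0 < dot f b -> 0 < dot g a -> (forall x, det3 a b x = 0) -> False.
Proof.
move=> fa fb ga H.
suff a0 : a = 0 by move: ga; rewrite a0 dot0 ltxx.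
apply: det0_vec => y z.
have := congr1 (dot f) (cramer a b y z).
rewrite dot0 !dotD !dotN !dotZ fa !H mulr0 !mul0r subr0 addr0 sub0r => /eqP.
rewrite oppr_eq0 mulf_eq0 => /orP[/eqP //|].
by rewrite gt_eqF.
Qed.


Definition om (m j : nat) : 'I_m.+1 := Ordinal (ltn_pmod j (ltn0Sn m)).

Lemma om_val m (i : 'I_m.+1) : om m i = i.
Proof. by apply/val_inj; rewrite /= modn_small. Qed.

Lemma ordS_om m (i : 'I_m.+1) : ordS i = om m i.+1.
Proof. by apply/val_inj. Qed.

Lemma ord_pred_om m (i : 'I_m.+1) : ord_pred i = om m (i + m).
Proof. by apply/val_inj; rewrite /= addnS. Qed.

Lemma om_mod m j : om m (j %% m.+1) = om m j.
Proof. apply/val_inj; change ((j %% m.+1) %% m.+1 = j %% m.+1)%N; exact: modn_mod. Qed.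

Lemma om_S m j : om m (om m j).+1 = om m j.+1.
Proof. apply/val_inj; change ((j %% m.+1).+1 %% m.+1 = j.+1 %% m.+1)%N; by rewrite -[(j %% m.+1).+1]addn1 -[j.+1]addn1 modnDml. Qed.

Lemma om_addk m j : om m (j + m.+1) = om m j.
Proof. apply/val_inj; change ((j + m.+1) %% m.+1 = j %% m.+1)%N; exact: modnDr. Qed.

Lemma om_inj_lt m a s t : (s < m.+1)%N -> (t < m.+1)%N -> om m (a + s) = om m (a + t) -> s = t.
Proof.
move=> hs ht /(congr1 val); change ((a + s) %% m.+1 = (a + t) %% m.+1 -> s = t)%N; move/eqP; rewrite eqn_modDl !modn_small //; exact/eqP.
Qed.

Lemma om_surj m a (i : 'I_m.+1) : exists2 t, (t < m.+1)%N & om m (a + t) = i.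
Proof.
exists ((i + (m.+1 - a %% m.+1)) %% m.+1)%N; first exact: ltn_pmod.
apply/val_inj; change ((a + (i + (m.+1 - a %% m.+1)) %% m.+1) %% m.+1 = val i)%N; rewrite modnDmr -modnDml.
have ha : (a %% m.+1 < m.+1)%N := ltn_pmod a (ltn0Sn m).
move: (a %% m.+1)%N ha => y hy.
have -> : (y + (i + (m.+1 - y)) = i + m.+1)%N by lia.
by rewrite modnDr modn_small.
Qed.


Definition geo (R : realType) m (v : 'I_m.+1 -> 'rV[R]_3) : Prop :=
  (forall i, face_set v [set i]) /\ (forall i, i != ordS i -> face_set v [set i; ordS i]).

Lemma om_neq m a s t : (s < m.+1)%N -> (t < m.+1)%N -> s != t -> om m (a + s) != om m (a + t).
Proof. move=> hs ht st; apply/eqP => /om_inj_lt h; move/eqP: st; apply; exact: h. Qed.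

Lemma ray_fun (R : realType) m (v : 'I_m.+1 -> 'rV[R]_3) : geo v ->
  forall a, exists f, dot f (v a) = 0 /\ forall j, j != a -> 0 < dot f (v j).
Proof.
move=> [hr _] a; have [u [u0 uz]] := hr a; exists u; split.
  by apply/uz; rewrite inE.
move=> j ja; rewrite lt_def u0 andbT; apply/eqP => /uz; rewrite inE (negbTE ja) => //.

Qed.

Lemma edgeW (R : realType) m (v : 'I_m.+1 -> 'rV[R]_3) : geo v -> (0 < m)%N ->
  forall i, exists e, dot e (v (om m i)) = 0 /\ dot e (v (om m i.+1)) = 0 /\
    forall l, om m l != om m i -> om m l != om m i.+1 -> 0 < dot e (v (om m l)).
Proof.
move=> [_ he] m0 i.
have hne : om m i != ordS (om m i).
  by rewrite ordS_om om_S; have := @om_neq m i 0 1; rewrite addn0 addn1; apply; lia.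
have [u [u0 uz]] := he _ hne; exists u; rewrite -om_S -ordS_om.
split; first by apply/uz; rewrite !inE eqxx.
split; first by apply/uz; rewrite !inE eqxx orbT.
move=> l h1 h2; rewrite lt_def u0 andbT; apply/eqP => /uz; rewrite !inE.
by rewrite (negbTE h1) (negbTE h2).
Qed.

Definition W (R : realType) m (v : 'I_m.+1 -> 'rV[R]_3) (j : nat) := v (om m j).
Definition epsv (R : realType) m (v : 'I_m.+1 -> 'rV[R]_3) :=
  det3 (W v 0) (W v 1) (W v 2).

Lemma om_neqS m a s t : (s < m.+1)%N -> (t < m.+1)%N -> s != t ->
  om m (a + s) != om m (a + t).
Proof. exact: om_neq. Qed.

Lemma eps_ne0 (R : realType) m (v : 'I_m.+1 -> 'rV[R]_3) : geo v -> (1 < m)%N ->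
  epsv v != 0.
Proof.
move=> g m1; apply/eqP => e0.
have [e [e0' [e1 ep]]] := edgeW g (ltnW m1) 0.
have n20 : om m 2 != om m 0 by have := @om_neq m 0 2 0; rewrite !add0n; apply; lia.
have n21 : om m 2 != om m 1 by have := @om_neq m 0 2 1; rewrite !add0n; apply; lia.
have n10 : om m 1 != om m 0 by have := @om_neq m 0 1 0; rewrite !add0n; apply; lia.
have [f [f0 fp]] := ray_fun g (om m 0).
have [h [_ hp]] := ray_fun g (om m 1).
apply: (nondeg (f := f) (g := h) (a := W v 0) (b := W v 1)).
- exact: f0.
- exact: fp.
- by apply: hp; rewrite eq_sym.
move=> x.
have := edge_rel (W v 2) x e0' e1.
rewrite -/(epsv v) e0 mul0r => /eqP; rewrite mulf_eq0 => /orP[/eqP //|].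
by rewrite gt_eqF // (ep 2).
Qed.


Lemma om_neq2 m i : (1 < m)%N ->
  [/\ om m i.+2 != om m i, om m i.+2 != om m i.+1 & om m i.+1 != om m i].
Proof.
move=> m1; split.
- by have := @om_neq m i 2 0; rewrite addn0 addn2; apply; lia.
- by have := @om_neq m i 2 1; rewrite addn1 addn2; apply; lia.
- by have := @om_neq m i 1 0; rewrite addn1 addn0; apply; lia.
Qed.

Lemma edge_pos (R : realType) m (v : 'I_m.+1 -> 'rV[R]_3) : geo v -> (1 < m)%N ->
  forall i l, om m l != om m i -> om m l != om m i.+1 ->
  0 < epsv v * det3 (W v i) (W v i.+1) (W v l).
Proof.
move=> g m1; elim=> [|i IH] l h1 h2.
  have [e [e0 [e1 ep]]] := edgeW g (ltnW m1) 0.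
  have [n20 n21 n10] := om_neq2 0 m1.
  have := edge_rel (W v 2) (W v l) e0 e1; rewrite -/(W v 0) -/(W v 1) -/(epsv v) => E.
  have p2 : 0 < dot e (W v 2) by apply: ep.
  have pl : 0 < dot e (W v l) by apply: ep.
  have en := eps_ne0 g m1.
  have : 0 < (epsv v * det3 (W v 0) (W v 1) (W v l)) * dot e (W v 2).
    rewrite -mulrA E mulrA; apply: mulr_gt0 => //.
    by rewrite -expr2 exprn_even_gt0.
  by rewrite pmulr_lgt0.
have [n20 n21 n10] := om_neq2 i m1.
have p := IH i.+2 n20 n21.
rewrite det_rot in p.
have [e [e0 [e1 ep]]] := edgeW g (ltnW m1) i.+1.
have [m20 m21 m10] := om_neq2 i.+1 m1.
have pi : 0 < dot e (W v i) by apply: ep; rewrite eq_sym.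
have pl : 0 < dot e (W v l) by apply: ep.
have := edge_rel (W v i) (W v l) e0 e1; rewrite -/(W v i.+1) -/(W v i.+2) => E.
have : 0 < (epsv v * det3 (W v i.+1) (W v i.+2) (W v l)) * dot e (W v i).
  by rewrite -mulrA E mulrA; apply: mulr_gt0.
by rewrite pmulr_lgt0.
Qed.

Lemma orient1 (R : realType) m (v : 'I_m.+1 -> 'rV[R]_3) : geo v -> (1 < m)%N ->
  forall a s, (0 < s)%N -> (s.+1 < m.+1)%N ->
  0 < epsv v * det3 (W v a) (W v (a + s)) (W v (a + s.+1)).
Proof.
move=> g m1 a s s0 s1.
rewrite det_rot addnS; apply: edge_pos => //.
- by have := @om_neq m a 0 s; rewrite addn0; apply; lia.
- by have := @om_neq m a 0 s.+1; rewrite addn0 addnS; apply; lia.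
Qed.

Lemma orient (R : realType) m (v : 'I_m.+1 -> 'rV[R]_3) : geo v -> (1 < m)%N ->
  forall a s t, (0 < s)%N -> (s < t)%N -> (t < m.+1)%N ->
  0 < epsv v * det3 (W v a) (W v (a + s)) (W v (a + t)).
Proof.
move=> g m1 a s t s0; elim: t => [//|u IH] su ut.
have [f [f0 fp]] := ray_fun g (om m a).
have fpos : forall j, (0 < j)%N -> (j < m.+1)%N -> 0 < dot f (W v (a + j)).
  move=> j j0 jk; apply: fp.
  by have := @om_neq m a j 0; rewrite addn0; apply; lia.
case: (ltngtP s u) => [lt|gt|eq].
- apply: (trans_lem (f := f) (y := W v (a + u))).
  + exact: f0.
  + apply: fpos; lia.
  + apply: fpos; lia.
  + apply: fpos; lia.
  + apply: IH; lia.
  + apply: orient1 => //; lia.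
- lia.
- by rewrite eq; apply: orient1 => //; lia.
Qed.

Local Close Scope ring_scope.

Lemma pred_omS m x : ord_pred (om m x.+1) = om m x.
Proof.
rewrite ord_pred_om; apply/val_inj.
change ((x.+1 %% m.+1 + m) %% m.+1 = x %% m.+1).
by rewrite modnDml addSnnS modnDr.
Qed.

Lemma om_nat m (i : 'I_m.+1) p : val i = p -> om m p = i.
Proof. by move=> <-; rewrite om_val. Qed.

Lemma starts_exist m (Pi : {set 'I_m.+1}) : Pi != setT -> Pi != set0 ->
  exists a, a \in Pi /\ ord_pred a \notin Pi.
Proof.
move=> nT n0.
case: (boolP [exists a, (a \in Pi) && (ord_pred a \notin Pi)]) => [/existsP[a /andP[h1 h2]]|]; first by exists a.
rewrite negb_exists => /forallP H; exfalso.
have cl : forall j, j \notin Pi -> ordS j \notin Pi.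
  move=> j jn; apply/negP => js; have := H (ordS j).
  by rewrite js ordSK jn.
have [j0 _ j0n] : exists2 j0, j0 \in setT & j0 \notin Pi.
  by move: nT; rewrite -subTset => /subsetPn.
have allout : forall t, om m (j0 + t) \notin Pi.
  elim=> [|t IH]; first by rewrite addn0 om_val.
  by rewrite addnS -om_S -ordS_om; apply: cl.
case/set0Pn: n0 => i iP.
have [t _ et] := om_surj j0 i.
by move: (allout t); rewrite et iP.
Qed.

Lemma pred_val m (i : 'I_m.+1) : (0 < i)%N -> ord_pred i = om m i.-1.
Proof. by move=> h; have := pred_omS m i.-1; rewrite prednK // om_val. Qed.

Lemma four m (Pi : {set 'I_m.+1}) : (1 < num_intervals Pi)%N ->
  exists p0 p1 p2 p3 (b : bool),
   [/\ (p0 < p1)%N, (p1 < p2)%N, (p2 < p3)%N, (p3 < m.+1)%N &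
   [/\ (om m p0 \in Pi) = b, (om m p1 \in Pi) = ~~ b, (om m p2 \in Pi) = b &
       (om m p3 \in Pi) = ~~ b]].
Proof.
rewrite /num_intervals; case: eqP => [_ //|nT] h.
have /card_gt1P [x [y [hx hy xy]]] := h.
wlog lt: x y hx hy xy / (nat_of_ord x < nat_of_ord y)%N.
  move=> Wl; case: (ltngtP x y) => [l|l|e].
  - exact: (Wl x y).
  - by apply: (Wl y x) => //; rewrite eq_sym.
  - by move/val_inj: e => e; rewrite e eqxx in xy.
move: hx hy; rewrite !inE => /andP[x1 x2] /andP[y1 y2].
have y0 : (0 < y)%N := leq_ltn_trans (leq0n _) lt.
rewrite (pred_val y0) in y2.
have ym : (y < m.+1)%N := ltn_ord y.
case: (posnP x) => x0.
- have ex : om m 0 = x by apply: om_nat.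
  have pm : ord_pred x = om m m by rewrite ord_pred_om x0.
  rewrite pm in x2.
  exists 0%N, y.-1, y, m, true; split.
  + case: (posnP y.-1) => // e; rewrite e ex in y2; by rewrite x1 in y2.
  + lia.
  + have : (y <= m)%N by lia.
    rewrite leq_eqVlt => /orP[/eqP e|//].
    by rewrite (om_nat e) y1 in x2.
  + by [].
  + by rewrite ex x1 (negbTE y2) om_val y1 (negbTE x2).
- rewrite (pred_val x0) in x2.
  exists x.-1, x, y.-1, y, false; split.
  + lia.
  + have : (x <= y.-1)%N by lia.
    rewrite leq_eqVlt => /orP[/eqP e|//].
    by rewrite (om_nat e) x1 in y2.
  + lia.
  + by [].
  + by rewrite (negbTE x2) om_val x1 (negbTE y2) om_val y1.
Qed.

Lemma arc_lem m (Pi : {set 'I_m.+1}) : ~~ (1 < num_intervals Pi)%N -> Pi != setT -> Pi != set0 ->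
  exists a r, [/\ (0 < r)%N, (r < m.+1)%N &
    forall t, (t < m.+1)%N -> (om m (a + t) \in Pi) = (t < r)%N].
Proof.
move=> h1 nT n0.
have [a0 [aP an]] := starts_exist nT n0.
have uniq : forall i, i \in Pi -> ord_pred i \notin Pi -> i = a0.
  move=> i iP ip; apply/eqP; apply: contraNT h1 => ia.
  rewrite /num_intervals (negbTE nT); apply/card_gt1P; exists i, a0.
  by rewrite !inE iP ip aP an.
set a := nat_of_ord a0.
have oa : om m (a + 0) = a0 by rewrite addn0 om_val.
have down : forall t, (t < m.+1)%N -> om m (a + t) \in Pi ->
    forall s, (s <= t)%N -> om m (a + s) \in Pi.
  elim=> [|t IH] tk h s st.
    by move: st; rewrite leqn0 => /eqP ->.
  have ht : om m (a + t) \in Pi.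
    apply/negPn/negP => hn.
    have : om m (a + t.+1) = om m (a + 0).
      by rewrite oa; apply: uniq h _; rewrite addnS pred_omS.
    by move/(om_inj_lt tk (ltn0Sn m)).
  move: st; rewrite leq_eqVlt => /orP[/eqP -> //|st].
  by apply: IH => //; lia.
have exP : exists t, (t < m.+1)%N && (om m (a + t) \notin Pi).
  have [j _ jn] : exists2 j, j \in setT & j \notin Pi.
    by move: nT; rewrite -subTset => /subsetPn.
  have [t tk et] := om_surj a j.
  by exists t; rewrite tk et jn.
case: (ex_minnP exP) => r /andP[rk rn] rmin.
exists a0, r; split => //.
- case: (posnP r) => // r0; by rewrite r0 oa aP in rn.
- move=> t tk; case: (ltnP t r) => tr.
  + apply/negPn/negP => hn.
    by have := rmin t; rewrite tk hn => /(_ isT); rewrite leqNgt tr.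
  + apply/negP => hP.
    by have := down t tk hP r tr; rewrite (negbTE rn).
Qed.

Local Open Scope ring_scope.

Lemma orient' (R : realType) m (v : 'I_m.+1 -> 'rV[R]_3) : geo v -> (1 < m)%N ->
  forall p q r, (p < q)%N -> (q < r)%N -> (r < m.+1)%N ->
  0 < epsv v * det3 (W v p) (W v q) (W v r).
Proof.
move=> g m1 p q r pq qr rk.
have := orient g m1 p (s := q - p) (t := r - p).
rewrite !subnKC //; try lia; apply; lia.
Qed.

Lemma sep (R : realType) m (v : 'I_m.+1 -> 'rV[R]_3) (Pi : {set 'I_m.+1}) : geo v ->
  ~~ (1 < num_intervals Pi)%N -> Pi != setT -> Pi != set0 ->
  exists u, (forall i, i \in Pi -> dot u (v i) <= 0) /\
            (forall i, i \notin Pi -> 0 < dot u (v i)).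
Proof.
move=> g h1 nT n0.
have [a [r [r0 rk cl]]] := arc_lem h1 nT n0.
have aP : om m a \in Pi by rewrite -[a]addn0 cl.
case: (ltngtP r 1) => [//|r1|r1]; first by lia.
- have m1 : (1 < m)%N by lia.
  exists (epsv v *: cross (W v a) (W v (a + r.-1))); split.
  + move=> i iP; have [t tk et] := om_surj a i.
    rewrite -et dotZl -/(det3 _ _ _) -/(W v (a + t)).
    move: iP; rewrite -et cl // => tr.
    case: (posnP t) => t0.
      by rewrite t0 addn0 det_aba mulr0.
    case: (ltngtP t r.-1) => [tr'|tr'|->]; last by rewrite det_abb mulr0.
      have := orient g m1 a t0 tr' (leq_ltn_trans (leq_pred r) rk).
      by rewrite det_swap mulrN => h; lra.
    lia.
  + move=> i iP; have [t tk et] := om_surj a i.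
    rewrite -et dotZl -/(det3 _ _ _) -/(W v (a + t)).
    move: iP; rewrite -et cl // -leqNgt => rt.
    apply: orient => //; lia.
- have [f [f0 fp]] := ray_fun g (om m a); exists f; split.
  + move=> i iP; have [t tk et] := om_surj a i.
    move: iP; rewrite -et cl // r1 ltnS leqn0 => /eqP ->.
    by rewrite addn0 f0.
  + move=> i iP; apply: fp; apply: contraNneq iP => ->; exact: aP.
Qed.

Lemma trivial_int (R : realType) k (v : 'I_k -> 'rV[R]_3) (Pi : {set 'I_k}) u x :
  (forall i, i \in Pi -> dot u (v i) <= 0) ->
  (forall i, i \notin Pi -> 0 < dot u (v i)) ->
  cone Pi v x -> cone (~: Pi) v x -> x = 0.
Proof.
move=> hin hout [c [c0 xc]] [d [d0 xd]].
have h1 : dot u x <= 0.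
  rewrite xc dot_sum -oppr_ge0 -sumrN; apply: sumr_ge0 => i iP.
  by rewrite oppr_ge0; apply: mulr_ge0_le0 => //; apply: hin.
have h2 : forall i, i \in ~: Pi -> 0 <= d i * dot u (v i).
  move=> i; rewrite inE => iP; apply: mulr_ge0 => //; apply: ltW; exact: hout.
have h3 : dot u x = 0.
  apply/eqP; rewrite eq_le h1 /= xd dot_sum; exact: sumr_ge0.
have := psumr_eq0P h2; rewrite -dot_sum -xd => /(_ h3) dz.
rewrite xd big1 // => i iP; have := dz i iP; move: iP; rewrite inE => /hout.
move=> hp /eqP; rewrite mulf_eq0 (gt_eqF hp) orbF => /eqP ->; exact: scale0r.
Qed.

Definition sg (R : realType) (b : bool) (y : 'rV[R]_3) := if b then - y else y.

Lemma four_geo (R : realType) m (v : 'I_m.+1 -> 'rV[R]_3) (Pi : {set 'I_m.+1}) :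
  geo v -> forall p0 p1 p2 p3 (b : bool),
   [/\ (p0 < p1)%N, (p1 < p2)%N, (p2 < p3)%N, (p3 < m.+1)%N &
   [/\ (om m p0 \in Pi) = b, (om m p1 \in Pi) = ~~ b, (om m p2 \in Pi) = b &
       (om m p3 \in Pi) = ~~ b]] ->
  (exists x, x != 0 /\ cone Pi v x /\ cone (~: Pi) v x) /\
  (forall x, cone setT (fun i => if i \in Pi then - v i else v i) x).
Proof.
move=> g p0 p1 p2 p3 b [l01 l12 l23 l3 [h0 h1 h2 h3]].
have m1 : (1 < m)%N by lia.
set wa := W v p0; set wb := W v p1; set wc := W v p2; set wd := W v p3.
set e := epsv v.
have A0 : 0 < e * det3 wb wc wd by apply: orient' => //; lia.
have B0 : 0 < e * det3 wa wc wd by apply: orient' => //; lia.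
have C0 : 0 < e * det3 wa wb wd by apply: orient' => //; lia.
have D0 : 0 < e * det3 wa wb wc by apply: orient' => //; lia.
set A := e * det3 wb wc wd; set B := e * det3 wa wc wd.
set C := e * det3 wa wb wd; set D := e * det3 wa wb wc.
have rel0 : A *: wa + C *: wc = B *: wb + D *: wd.
  have /rowP h := cramer wa wb wc wd; apply/rowP => j; have := h j; rewrite !mxE => hj.
  have : e * (det3 wb wc wd * wa 0 j - det3 wa wc wd * wb 0 j + det3 wa wb wd * wc 0 j
     - det3 wa wb wc * wd 0 j) = 0 by rewrite hj mulr0.
  rewrite /A /B /C /D; lra.
have dne : det3 wa wb wc != 0 by apply: contraTneq D0 => ->; rewrite mulr0 ltxx.
split.
- have xne : A *: wa + C *: wc != 0.
    apply: contraNneq dne => x0.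
    have := congr1 (dot (cross wb wc)) x0.
    rewrite dot0 dotD !dotZ -/(det3 wb wc wa) -/(det3 wb wc wc) det_abb mulr0 addr0.
    rewrite -det_rot => /eqP; rewrite mulf_eq0 (gt_eqF A0) /= => /eqP //.
  exists (A *: wa + C *: wc); split => //.
  have gen : forall (S : {set 'I_m.+1}) p, om m p \in S -> cone S v (W v p).
    by move=> S p hp; apply: cone_gen.
  case: b h0 h1 h2 h3 => h0 h1 h2 h3; split.
  + apply: cone_add; apply: cone_scale; (try by apply: ltW); apply: gen => //.
  + rewrite rel0; apply: cone_add; apply: cone_scale; (try by apply: ltW);
      apply: gen; rewrite inE ?h1 ?h3 //.
  + rewrite rel0; apply: cone_add; apply: cone_scale; (try by apply: ltW); apply: gen => //.
  + apply: cone_add; apply: cone_scale; (try by apply: ltW);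
      apply: gen; rewrite inE ?h0 ?h2 //.
- set gg := (fun i => if i \in Pi then - v i else v i).
  have gv : forall p, gg (om m p) = sg (om m p \in Pi) (W v p) by [].
  apply: (span_all (C := cone setT gg) (g1 := gg (om m p0)) (g2 := gg (om m p1))
     (g3 := gg (om m p2)) (g4 := gg (om m p3)) (a := A) (b := B) (c := C) (d := D)).
  + exact: cone_add.
  + by move=> t x t0 cx; apply: cone_scale.
  + by apply: cone_gen; rewrite inE.
  + by apply: cone_gen; rewrite inE.
  + by apply: cone_gen; rewrite inE.
  + by apply: cone_gen; rewrite inE.
  + exact: A0.
  + exact: B0.
  + exact: C0.
  + exact: D0.
  + rewrite !gv h0 h1 h2 h3 -/wa -/wb -/wc -/wd.
    move/rowP: rel0 => h; apply/rowP => j; have := h j.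
    by case: b {h0 h1 h2 h3}; rewrite /sg /= !mxE => hj; lra.
  + rewrite !gv h0 h1 h2 -/wa -/wb -/wc.
    by case: b {h0 h1 h2 h3}; rewrite /sg /= !det3E !mxE; move: dne; rewrite det3E;
      apply: contraNneq => h; lra.
Qed.

Unset Implicit Arguments. Set Strict Implicit.
Theorem mainTheorem9 (R : realType) (k : nat) (n : 'I_k -> 'rV[int]_3)
  (Pi : {set 'I_k}) :
  cyclic_ray_data R n ->
  ((exists x : 'rV[R]_3, x != 0 /\
       cone Pi (fun i => realize R (n i)) x /\
       cone (~: Pi) (fun i => realize R (n i)) x)
     <-> (1 < num_intervals Pi)%N) /\
  ((1 < num_intervals Pi)%N ->
     forall x : 'rV[R]_3, cone setT (signed_gens R n Pi) x).
Proof.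
move=> [_ [_ [_ [hray hedge]]]].
case: k n Pi hray hedge => [|m] n Pi hray hedge.
  have eT : Pi == setT by apply/eqP/setP => -[].
  rewrite /num_intervals eT /=; split => //; split => //.
  move=> [x [xn [[c [_ xc]] _]]].
  by move: xn; rewrite xc big1 ?eqxx // => -[].
set v := fun i => realize R (n i).
have g : geo v.
  split; first exact: hray.
  by move=> i hi; apply/(hedge i (ordS i) hi); left.
split; first split.
- move=> [x [xn [c1 c2]]]; apply/negPn/negP => h.
  case: (eqVneq Pi setT) => [eT|nT].
    by rewrite eT setCT in c2; move: xn; rewrite (cone_set0 c2) eqxx.
  case: (eqVneq Pi set0) => [e0|n0].
    by rewrite e0 in c1; move: xn; rewrite (cone_set0 c1) eqxx.
  have [u [hu1 hu2]] := sep g h nT n0.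
  by move: xn; rewrite (trivial_int hu1 hu2 c1 c2) eqxx.
- move=> h; have [p0 [p1 [p2 [p3 [b hb]]]]] := four h.
  exact: (proj1 (four_geo g hb)).
- move=> h x; have [p0 [p1 [p2 [p3 [b hb]]]]] := four h.
  exact: (proj2 (four_geo g hb) x).
Qed.
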